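(* Let $k$ be a positive integer and $p\geq 3$ a prime such that $p^{2}(p-1)\mid k$, and let $r\in\{1,\ldots,p-2\}$. Then there are infinitely many positive integers $n$ such that $$\nu_{p}\big(A_{p,k-r}(n)\big)\geq \nu_{p}(k).$$
   Context: For an integer $m\geq 2$ and a positive integer $k$, the integers $A_{m,k}(n)$, $n\in\mathbb{N}=\{0,1,2,\ldots\}$, are defined by the formal power series identity $\prod_{i=0}^{\infty}\big(1-x^{m^{i}}\big)^{-k}=\sum_{n=0}^{\infty}A_{m,k}(n)x^{n}$. For a prime $p$, $\nu_p(n)$ denotes the $p$-adic valuation of the integer $n$, with $\nu_p(0)=+\infty$. *)

(* Defs.v *)
From mathcomp Require Import all_boot all_order all_algebra.
Set Implicit Arguments. Unset Strict Implicit. Unset Printing Implicit Defensive.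
Import GRing.Theory.
Local Open Scope ring_scope.

(* Truncation of the geometric series 1/(1 - x^d) = \sum_j x^(j d) to the
   monomials of exponent j*d with j <= N. *)
Definition geom_trunc (d N : nat) : {poly nat} :=
  \sum_(j < N.+1) 'X^(j * d).

(* A_{m,k}(n) = [x^n] \prod_{i>=0} (1 - x^{m^i})^{-k}.
   Only factors with m^i <= n (so i <= n, as m >= 2) and, within each factor,
   only terms of degree <= n contribute to the coefficient of x^n; hence the
   coefficient of x^n of the following finite product is exactly A_{m,k}(n)
   (for m >= 2). *)
Definition A (m k n : nat) : nat :=
  let P : {poly nat} := (\prod_(i < n.+1) (geom_trunc (m ^ i)%N n ^+ k))%R in nth 0%N (polyseq P) n.

Definition nu_ge (p a e : nat) : Prop := a = 0%N \/ (e <= logn p a)%N.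

(* Main.v *)
Require Import Defs.
From mathcomp Require Import all_boot all_order all_algebra.
From mathcomp Require Import zify ring.
Set Implicit Arguments. Unset Strict Implicit. Unset Printing Implicit Defensive.
Import GRing.Theory.
Local Open Scope ring_scope.

Definition cg (q : int) (n : nat) (a b : {poly int}) :=
  forall i, (i <= n)%N -> (q %| (a - b)`_i)%Z.

Lemma cg_refl q n a : cg q n a a.
Proof. by move=> i _; rewrite subrr coef0 dvdz0. Qed.

Lemma cg_sym q n a b : cg q n a b -> cg q n b a.
Proof. by move=> h i hi; rewrite -opprB coefN rpredN h. Qed.

Lemma cg_trans q n a b c : cg q n a b -> cg q n b c -> cg q n a c.
Proof.
move=> h1 h2 i hi; have -> : a - c = (a - b) + (b - c) by rewrite addrA subrK.
by rewrite coefD rpredD ?h1 ?h2.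
Qed.

Lemma cg0 q n a b : cg 0 n a b -> cg q n a b.
Proof. by move=> h i hi; move: (h i hi); rewrite dvdzE dvd0n absz_eq0 => /eqP ->; rewrite dvdz0. Qed.

Lemma cg_dvd q q' n a b : (q %| q')%Z -> cg q' n a b -> cg q n a b.
Proof. by move=> hq h i hi; apply: dvdz_trans hq (h i hi). Qed.

Lemma cg_add q n a b c d : cg q n a b -> cg q n c d -> cg q n (a + c) (b + d).
Proof.
move=> h1 h2 i hi; have -> : a + c - (b + d) = (a - b) + (c - d) by ring.
by rewrite coefD rpredD ?h1 ?h2.
Qed.

Lemma cg_mulr q n a b c : cg q n a b -> cg q n (a * c) (b * c).
Proof.
move=> h i hi; rewrite -mulrBl coefM; apply: (big_ind (fun x => (_ %| x)%Z)) => //.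
  by move=> x y; apply: rpredD.
move=> j _; apply: dvdz_mulr; apply: h; apply: leq_trans hi.
by rewrite -ltnS.
Qed.

Lemma cg_mul q n a b c d : cg q n a b -> cg q n c d -> cg q n (a * c) (b * d).
Proof.
move=> h1 h2; apply: cg_trans (cg_mulr c h1) _.
rewrite ![b * _]mulrC; exact: cg_mulr.
Qed.

Lemma cg_exp q n a b m : cg q n a b -> cg q n (a ^+ m) (b ^+ m).
Proof.
move=> h; elim: m => [|m ih]; first exact: cg_refl.
by rewrite !exprS; apply: cg_mul.
Qed.

Lemma cg_mul0 q1 q2 n a b : cg q1 n a 0 -> cg q2 n b 0 -> cg (q1 * q2) n (a * b) 0.
Proof.
move=> h1 h2 i hi; rewrite subr0 coefM; apply: (big_ind (fun x => (_ %| x)%Z)) => //.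
  by move=> x y; apply: rpredD.
move=> j _; apply: dvdz_mul.
  by move: (h1 j); rewrite subr0; apply; apply: leq_trans hi; rewrite -ltnS.
by move: (h2 (i - j)%N); rewrite subr0; apply; apply: leq_trans hi; rewrite leq_subr.
Qed.

Lemma cg_sub0 q n a b : cg q n a b <-> cg q n (a - b) 0.
Proof. by split=> h i hi; move: (h i hi); rewrite ?subr0. Qed.

Lemma cg_sum q n (I : Type) (s : seq I) (P : pred I) (F G : I -> {poly int}) :
  (forall i, P i -> cg q n (F i) (G i)) ->
  cg q n (\sum_(i <- s | P i) F i) (\sum_(i <- s | P i) G i).
Proof.
move=> h; apply: (big_ind2 (cg q n)) => //; first exact: cg_refl.
by move=> *; apply: cg_add.
Qed.

Lemma cg_prod q n (I : Type) (s : seq I) (P : pred I) (F G : I -> {poly int}) :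
  (forall i, P i -> cg q n (F i) (G i)) ->
  cg q n (\prod_(i <- s | P i) F i) (\prod_(i <- s | P i) G i).
Proof.
move=> h; apply: (big_ind2 (cg q n)) => //; first exact: cg_refl.
by move=> *; apply: cg_mul.
Qed.

Lemma frob p n (a b : {poly int}) : prime p ->
  cg p%:Z n ((a + b) ^+ p) (a ^+ p + b ^+ p).
Proof.
move=> pr i hi.
rewrite (dvdz_pcharf (pchar_Fp pr)) -(coef_map (intr : {rmorphism int -> 'F_p})).
rewrite rmorphB rmorphD !rmorphXn rmorphD exprDn_pchar ?subrr ?coef0 //.
by rewrite pnatE // (pchar_poly _ p) pchar_Fp.
Qed.

Lemma cg_muln0 p n x : cg p%:Z n (x *+ p) 0.
Proof.
by move=> i _; rewrite subr0 coefMn -mulr_natr natz dvdz_mull // dvdzz.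
Qed.

Lemma cg_lift p n u v j : prime p -> cg (p%:Z ^+ j.+1) n u v ->
  cg (p%:Z ^+ j.+2) n (u ^+ p) (v ^+ p).
Proof.
move=> pr h; apply/cg_sub0; rewrite subrXX [p%:Z ^+ j.+2]exprS mulrC.
apply: cg_mul0; first by move/cg_sub0: h.
have hp : cg p%:Z n u v by apply: cg_dvd h; rewrite (dvdz_exp2l _ (_ : 1 <= j.+1)%N).
apply: (@cg_trans _ _ _ (\sum_(i < p) v ^+ (p.-1 - i) * v ^+ i)).
  by apply: cg_sum => i _; apply: cg_mulr; apply: cg_exp.
have -> : \sum_(i < p) v ^+ (p.-1 - i) * v ^+ i = v ^+ p.-1 *+ p.
  rewrite (eq_bigr (fun _ => v ^+ p.-1)); first by rewrite sumr_const card_ord.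
  by move=> i _; rewrite -exprD subnK // -ltnS prednK ?prime_gt0.
exact: cg_muln0.
Qed.

Lemma lift_iter p n u v j : prime p -> cg p%:Z n u v ->
  cg (p%:Z ^+ j.+1) n (u ^+ (p ^ j)) (v ^+ (p ^ j)).
Proof.
move=> pr h; elim: j => [|j ih]; first by rewrite expr1 expn0 !expr1.
by rewrite expnSr !exprM; apply: cg_lift.
Qed.

Lemma cg_prod1 q n (I : Type) (s : seq I) (P : pred I) (F : I -> {poly int}) :
  (forall i, P i -> cg q n (F i) 1) -> cg q n (\prod_(i <- s | P i) F i) 1.
Proof.
move=> h; apply: (big_ind (fun x => cg q n x 1)) => //; first exact: cg_refl.
by move=> x y hx hy; rewrite -[1]mulr1; apply: cg_mul.
Qed.

Definition Gd (d n : nat) : {poly int} := \sum_(j < n.+1) 'X^(j * d).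
Definition Ff (p n : nat) : {poly int} := \prod_(i < n.+1) Gd (p ^ i) n.
Definition Hh (p n : nat) : {poly int} := \prod_(i < n.+1) (1 - 'X^(p ^ i)).

Lemma GdH d n : Gd d n * (1 - 'X^d) = 1 - 'X^(n.+1 * d).
Proof.
rewrite mulnC exprM.
have -> : 1 - ('X^d : {poly int}) ^+ n.+1 = (1 - 'X^d) * \sum_(i < n.+1) ('X^d) ^+ i.
  by rewrite -opprB subrX1 -mulNr opprB.
rewrite /Gd.
rewrite (eq_bigr (fun j : 'I_n.+1 => ('X^d) ^+ j)); last by move=> j _; rewrite -exprM mulnC.
by rewrite mulrC.
Qed.

Lemma cg_1X n m : (n < m)%N -> cg 0 n (1 - 'X^m) 1.
Proof.
move=> hm i hi; rewrite addrAC subrr add0r coefN coefXn.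
have -> : (i == m) = false by apply/negbTE; rewrite neq_ltn (leq_ltn_trans hi hm).
by rewrite oppr0 dvdz0.
Qed.

Lemma FH1 p n : (0 < p)%N -> cg 0 n (Ff p n * Hh p n) 1.
Proof.
move=> p0; rewrite /Ff /Hh -big_split /=.
apply: cg_prod1 => i _; rewrite GdH; apply: cg_1X.
have h : (0 < p ^ i)%N by rewrite expn_gt0 p0.
by rewrite mulSn; nia.
Qed.

Lemma frob1 p n d : prime p -> odd p -> cg p%:Z n ((1 - 'X^d) ^+ p) (1 - 'X^(d * p)).
Proof.
move=> pr op; apply: (cg_trans (frob 1 (- 'X^d) pr)).

rewrite expr1n exprNn -signr_odd op expr1 mulN1r -exprM; exact: cg_refl.
Qed.

Lemma Fp1 p n : prime p -> odd p -> cg p%:Z n (Ff p n ^+ p.-1) (1 - 'X).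
Proof.
move=> pr op; have p0 := prime_gt0 pr.
set F := Ff p n; set H := Hh p n.
have FH := FH1 (n:=n) p0; rewrite -/F -/H in FH.
apply: (@cg_trans _ _ _ (F * H * F ^+ p.-1)).
  by have := cg_mulr (F ^+ p.-1) FH; rewrite mul1r => h; apply: cg0; apply: cg_sym.
have -> : F * H * F ^+ p.-1 = H * F ^+ p.
  by rewrite -(prednK p0) exprS /= ; ring.
have p1 := prime_gt1 pr.
have hn : (n < p ^ n.+1)%N by apply: leq_trans (ltn_expl _ p1); rewrite ltnS.
apply: (@cg_trans _ _ _ (H * (1 - 'X^(p ^ n.+1)) * F ^+ p)).
  apply: cg0; apply: cg_mulr; rewrite -{1}[H]mulr1; apply: cg_mul; first exact: cg_refl.
  by apply: cg_sym; apply: cg_1X.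
have -> : H * (1 - 'X^(p ^ n.+1)) = (1 - 'X) * \prod_(i < n.+1) (1 - 'X^(p ^ i.+1)).
  have e1 := big_ord_recl n.+1 (fun i : 'I_n.+2 => (1 - 'X^(p ^ i)) : {poly int}).
  have e2 := big_ord_recr n.+1 (fun i : 'I_n.+2 => (1 - 'X^(p ^ i)) : {poly int}).
  rewrite /= expn0 expr1 in e1 e2; rewrite -e1 e2 //.
apply: (@cg_trans _ _ _ ((1 - 'X) * H ^+ p * F ^+ p)).
  apply: cg_mulr; apply: cg_mul; first exact: cg_refl.
  rewrite /H /Hh -prodrXl; apply: cg_sym; apply: cg_prod => i _.
  by rewrite expnSr; apply: frob1.
rewrite -mulrA -exprMn mulrC; rewrite -[X in cg _ _ _ X]mul1r.
apply: cg_mulr; apply: cg0; rewrite -(expr1n _ p); apply: cg_exp.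
by rewrite mulrC.
Qed.

Definition supp (a : {poly int}) (P : pred nat) := forall j, a`_j != 0 -> P j.

Lemma supp_mul a b (P Q R : pred nat) : supp a P -> supp b Q ->
  (forall u v, P u -> Q v -> R (u + v)%N) -> supp (a * b) R.
Proof.
move=> ha hb hR j; apply: contraR => nR; rewrite coefM big1 // => i _.
case: (eqVneq a`_i 0) => [->|ai]; first by rewrite mul0r.
case: (eqVneq b`_(j - i) 0) => [->|bi]; first by rewrite mulr0.
have := hR _ _ (ha _ ai) (hb _ bi); rewrite subnKC ?(negbTE nR) //.
by rewrite -ltnS ltn_ord.
Qed.

Lemma supp_1Xd r d : supp ((1 - 'X^d) ^+ r) (fun j => (d %| j)%N && (j <= r * d)%N).
Proof.
elim: r => [|r ih].
  move=> j; rewrite expr0 coef1; case: j => [|j] /=; first by rewrite dvdn0.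
  by [].
rewrite exprS; apply: (@supp_mul _ _ (fun j => (d %| j)%N && (j <= d)%N) _ _ _ ih).
  move=> j; rewrite coefB coef1 coefXn.
  case: (eqVneq j 0) => [->|j0]; first by rewrite dvdn0.
  case: (eqVneq j d) => [->|jd]; first by rewrite dvdnn leqnn.
  by rewrite subrr eqxx.
move=> u v /andP[du ud] /andP[dv vd]; rewrite dvdn_add //= mulSn.
exact: leq_add.
Qed.

Lemma supp_lo p r L : (r < p)%N ->
  supp (\prod_(i < L) (1 - 'X^(p ^ i)) ^+ r) (fun j => (j < p ^ L)%N).
Proof.
move=> rp; elim: L => [|L ih].
  move=> j; rewrite big_ord0 coef1 expn0; case: j => [|j] //=.
rewrite big_ord_recr /=; refine (supp_mul ih (@supp_1Xd r (p ^ L)) _).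
move=> u v hu /andP[_ hv]; rewrite expnS; nia.
Qed.

Lemma supp_seq (s : seq nat) (F : nat -> {poly int}) (Q : pred nat) :
  Q 0%N -> (forall u v, Q u -> Q v -> Q (u + v)%N) ->
  (forall i, i \in s -> supp (F i) Q) -> supp (\prod_(i <- s) F i) Q.
Proof.
move=> Q0 QD h; rewrite big_seq.
refine (big_ind (fun x => supp x Q) _ _ _) => //.
  move=> j; rewrite coef1; case: j => [|j] //=.
by move=> x y hx hy; refine (supp_mul hx hy _).
Qed.

Lemma Hr_zero p r n L m : (r.+2 <= p)%N -> (L <= n)%N ->
  ((r.+1 * p ^ L) <= m < r.+2 * p ^ L)%N -> (Hh p n ^+ r)`_m = 0.
Proof.
move=> rp Ln /andP[m1 m2].
have p0 : (0 < p)%N by apply: leq_trans rp.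
have P0 : (0 < p ^ L)%N by rewrite expn_gt0 p0.
rewrite /Hh -prodrXl -(big_mkord xpredT (fun i => (1 - 'X^(p ^ i)) ^+ r)).
rewrite (@big_cat_nat _ _ _ L) //=; last by apply: leq_trans Ln _.
rewrite [\prod_(L <= i < n.+1) _]big_ltn ?ltnS //= big_mkord.
have hB : supp (\prod_(L.+1 <= i < n.+1) (1 - 'X^(p ^ i)) ^+ r)
             (fun j => (p ^ L.+1 %| j)%N).
  apply: supp_seq => //; first by move=> u v; apply: dvdn_add.
  move=> i; rewrite mem_iota => /andP[hi _] j hj.
  have /andP[dj _] := @supp_1Xd r (p ^ i) j hj.
  by apply: dvdn_trans dj; rewrite dvdn_exp2l.
pose Rab := (fun j => ~~ ((r * p ^ L) < j < r.+2 * p ^ L)%N).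
pose R2 := (fun j => ~~ ((r.+1 * p ^ L) <= j < r.+2 * p ^ L)%N).
have hR1 : forall u v, (p ^ L %| u)%N && (u <= r * p ^ L)%N ->
    (p ^ L.+1 %| v)%N -> Rab (u + v)%N.
  move=> u v /andP[du uu] /dvdnP[s ->]; apply/negP => /andP[h1 h2].
  rewrite expnS in h1 h2; case: s h1 h2 => [|s] h1 h2; nia.
have hR2 : forall u v, (u < p ^ L)%N -> Rab v -> R2 (u + v)%N.
  move=> u v hu hv; apply/negP => /andP[h1 h2]; move/negP: hv; apply.
  apply/andP; split; nia.
have hAll := @supp_mul _ _ _ Rab R2 (@supp_lo p r L (ltnW rp))
   (@supp_mul _ _ _ _ Rab (@supp_1Xd r (p ^ L)) hB hR1) hR2.
by have := hAll m; case: eqP => // _ /(_ isT); rewrite /R2 m1 m2.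
Qed.

Lemma A_eq p k n : Posz (A p k n) = (Ff p n ^+ k)`_n.
Proof.
rewrite /A /Ff -prodrXl.
have -> : forall P : {poly nat}, Posz (nth 0%N (polyseq P) n) = (map_poly Posz P)`_n.
  by move=> P; rewrite coef_map.
congr (_ `_ n); rewrite rmorph_prod.
rewrite (eq_bigr (fun i : 'I_n.+1 => Gd (p ^ i) n ^+ k)) // => i _.
rewrite rmorphXn /geom_trunc /Gd rmorph_sum; congr (_ ^+ _).
apply: eq_bigr => j _; exact: map_polyXn.
Qed.

Local Close Scope ring_scope.

Theorem theorem3p2 (k p r : nat) :
  (0 < k)%N -> prime p -> (3 <= p)%N -> (p ^ 2 * (p - 1) %| k)%N ->
  (1 <= r)%N -> (r <= p - 2)%N ->
  forall N : nat, exists n : nat, (N < n)%N /\ nu_ge p (A p (k - r) n) (logn p k).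
Proof.
move=> k0 pr p3 hdvd r1 rp N.
set e := logn p k.
have p1 := prime_gt1 pr.
have op : odd p by case: (even_prime pr) => // p2; rewrite p2 in p3.
have hpe : (p ^ e %| k)%N by rewrite pfactor_dvdn.
have hp1 : (p - 1 %| k)%N := dvdn_trans (dvdn_mull _ (dvdnn _)) hdvd.
have cop : coprime (p - 1) (p ^ e.-1).
  apply: coprimeXr; rewrite coprime_sym prime_coprime //; apply/negP => /dvdn_leq.
  have : (0 < p - 1 < p)%N by clear -p1; apply/andP; split; lia.
  by case/andP=> a b /(_ a); rewrite leqNgt b.
have hk : ((p - 1) * p ^ e.-1 %| k)%N.
  by rewrite Gauss_dvd // hp1 (dvdn_trans (dvdn_exp2l _ (leq_pred e)) hpe).
set c := k %/ ((p - 1) * p ^ e.-1).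
have kE : k = (p.-1 * p ^ e.-1 * c)%N by rewrite /c -subn1 [X in _ = X]mulnC divnK.
set K := (p ^ e.-1 * c)%N.
set L := (K + N).+1.
set P := p ^ L.
have LP : (L < P)%N := ltn_expl L p1.
set n := (r.+2 * P).-1.
have h2 : (2 * P <= r.+2 * P)%N by apply: leq_mul.
have hQ : (r.+2 * P = r.+1 * P + P)%N by rewrite mulSn addnC.
have KL : (K < P)%N by apply: ltn_trans LP; rewrite /L ltnS leq_addr.
have KN : (N < L)%N by rewrite /L ltnS leq_addl.
have Ln : (L < n)%N.
  rewrite /n; move: h2 LP; clear; move: (r.+2 * P) => Q; lia.
exists n; split.
  apply: ltn_trans KN Ln.
have F1 := Fp1 (n:=n) pr op.
have F2 := lift_iter e.-1 pr F1.
have F3 := cg_exp c F2.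
rewrite -!exprM -/K mulnA -kE in F3.
have F4 := cg_dvd (dvdz_exp2l (p%:Z) (leqSpred e)) F3.
have rk : (r <= k)%N.
  have : (p ^ 2 * (p - 1) <= k)%N by apply: dvdn_leq.
  have : (p - 1 <= p ^ 2 * (p - 1))%N by rewrite leq_pmull // expn_gt0 (ltnW p1).
  move: rp; clear; move: (p ^ 2 * (p - 1))%N => q; lia.
have F5 : cg (p%:Z ^+ e) n (Ff p n ^+ (k - r)) ((1 - 'X) ^+ K * Hh p n ^+ r).
  apply: cg_trans (cg_mulr (Hh p n ^+ r) F4).
  apply: cg0.
  have h := cg_mul (cg_refl 0 (n:=n) (Ff p n ^+ (k - r))) (cg_exp r (FH1 (n:=n) (prime_gt0 pr))).
  rewrite expr1n mulr1 in h; apply: cg_sym; move: h.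
  by rewrite exprMn mulrA -exprD subnK.
have rp2 : (r.+2 <= p)%N by move: rp p3; clear; lia.
have s1 := @supp_1Xd K 1; rewrite expr1 in s1.
have s2 : supp (Hh p n ^+ r) (fun j => ~~ ((r.+1 * P) <= j < r.+2 * P)%N).
  by move=> j; apply: contra_neqN => hj; exact: (Hr_zero rp2 (ltnW Ln) hj).
have hR : forall u v, (1 %| u)%N && (u <= K * 1)%N ->
    ~~ ((r.+1 * P) <= v < r.+2 * P)%N -> (u + v)%N != n.
  move=> u v /andP[_ hu]; rewrite muln1 in hu; rewrite /n hQ.
  move: KL hu; clear; move: (r.+1 * P)%N => Q1; lia.
have hc := @supp_mul _ _ _ _ (fun j => j != n) s1 s2 hR n.
have hc0 : ((((1 - 'X) ^+ K * Hh p n ^+ r) : {poly int})`_n = 0)%R.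
  by apply/eqP; apply: contraT => /hc; rewrite eqxx.
have hz := F5 n (leqnn n); rewrite coefB hc0 GRing.subr0 -A_eq in hz.
rewrite /nu_ge; case: (posnP (A p (k - r) n)) => [->|a0]; first by left.
right; rewrite -pfactor_dvdn //.
by move: hz; rewrite dvdzE abszX.
Qed.
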